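(* Let $E$ be a directed graph. (1) Every non-empty clopen subset of $\partial E$ contains two distinct points of some single $\mathcal{G}_E$-orbit if and only if $E$ satisfies Conditions (L) and (T). (2) $|\operatorname{Orb}_{\mathcal{G}_E}(x)|\ge3$ for all $x\in\partial E$ if and only if $E$ has no degenerate vertices.
   Context: Graph notation: $E=(E^0,E^1,r,s)$; finite paths $e_1\cdots e_n$ with $r(e_i)=s(e_{i+1})$ (vertices are paths of length $0$); $vE^*w$ the paths from $v$ to $w$; $vE^1$, $E^1v$ edges with source, resp. range, $v$. Sink: $vE^1=\emptyset$; source: $E^1v=\emptyset$; singular: sink or $vE^1$ infinite. Cycle: positive-length path with $r=s$; loop: cycle of length 1; exit of $e_1\cdots e_n$: edge $e\ne e_i$ with $s(e)=s(e_i)$. Condition (L): every cycle has an exit. Condition (T): for every $v$ there is $w$ with $|vE^*w|\ge2$. A vertex $v$ is degenerate if: (1) $E^1v=\{e\}$ with $e$ a loop; or (2) $E^1v=\{e,f\}$, $e$ a loop, $s(f)$ a source; or (3) there is $w\ne v$ with $E^1v=\{e\}=wE^1v$ and $E^1w=\{f\}=vE^1w$; or (4) $vE^1$ infinite and $E^1v=\emptyset$; or (5) $v$ singular and $E^1v=\{f\}$ with $s(f)$ a source; or (6) $vE^1=E^1v=\emptyset$. $\partial E=E^\infty\cup\{\mu: r(\mu)\text{ singular}\}$ with basis $Z(\mu)\setminus\bigcup_{e\in F}Z(\mu e)$ ($Z(\mu)=\{\mu x\in\partial E\}$, $F\subseteq r(\mu)E^1$ finite); $\sigma_E$ deletes the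 first edge (sending a single edge $e$ to $r(e)$). $\mathcal{G}_E=\{(x,m-n,y):m,n\ge0,|x|\ge m,|y|\ge n,\sigma_E^m(x)=\sigma_E^n(y)\}$ with $r(x,k,y)=x$, $s(x,k,y)=y$, unit space $\partial E$; $\operatorname{Orb}_{\mathcal{G}_E}(x)=\{r(g): g\in\mathcal{G}_E, s(g)=x\}$ (equivalently, boundary paths tail equivalent to $x$). *)

(* Defs.v *)
From Stdlib Require Import List ZArith.
Import ListNotations.
Set Implicit Arguments.

(* A directed graph E = (E^0, E^1, r, s); no countability assumed. *)
Record graph := Graph {
  vert : Type;
  edge : Type;
  rg : edge -> vert;
  sc : edge -> vert }.
Arguments rg {g} _.
Arguments sc {g} _.

Section G.
Variable E : graph.

(* A finite path is a pair (v, e_1 ... e_n): start vertex v and edges with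
   s(e_1) = v and r(e_i) = s(e_{i+1}); n = 0 gives the vertex v. *)
Fixpoint valid_path (v : vert E) (l : list (edge E)) : Prop :=
  match l with
  | [] => True
  | e :: l' => sc e = v /\ valid_path (rg e) l'
  end.

Fixpoint path_range (v : vert E) (l : list (edge E)) : vert E :=
  match l with
  | [] => v
  | e :: l' => path_range (rg e) l'
  end.

Definition out_finite (v : vert E) : Prop :=
  exists L : list (edge E), forall e, sc e = v -> In e L.

Definition is_sink (v : vert E) : Prop := forall e, sc e <> v.
Definition is_source (v : vert E) : Prop := forall e, rg e <> v.
Definition singular (v : vert E) : Prop := is_sink v \/ ~ out_finite v.

Definition condL : Prop :=
  forall (v : vert E) (l : list (edge E)),
    l <> [] -> valid_path v l -> path_range v l = v ->
    exists i ei e, nth_error l i = Some ei /\ sc e = sc ei /\ e <> ei.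

Definition condT : Prop :=
  forall v : vert E, exists (w : vert E) (l1 l2 : list (edge E)),
    valid_path v l1 /\ valid_path v l2 /\
    path_range v l1 = w /\ path_range v l2 = w /\ l1 <> l2.

Definition degenerate (v : vert E) : Prop :=
  (exists e, (forall g, rg g = v <-> g = e) /\ sc e = rg e)
  \/ (exists e f, (forall g, rg g = v <-> g = e \/ g = f) /\ sc e = rg e
                  /\ is_source (sc f))
  \/ (exists (w : vert E) e f, w <> v
        /\ (forall g, rg g = v <-> g = e) /\ sc e = w
        /\ (forall g, rg g = w <-> g = f) /\ sc f = v)
  \/ (~ out_finite v /\ is_source v)
  \/ (singular v /\ exists f, (forall g, rg g = v <-> g = f) /\ is_source (sc f))
  \/ (is_sink v /\ is_source v).

Inductive bpath :=
  | BFin : vert E -> list (edge E) -> bpath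
  | BInf : (nat -> edge E) -> bpath.

Definition in_bd (p : bpath) : Prop :=
  match p with
  | BFin v l => valid_path v l /\ singular (path_range v l)
  | BInf x => forall n, rg (x n) = sc (x (S n))
  end.

Definition len_ge (p : bpath) (m : nat) : Prop :=
  match p with
  | BFin _ l => m <= length l
  | BInf _ => True
  end.

Definition bshift (m : nat) (p : bpath) : bpath :=
  match p with
  | BFin v l => BFin (path_range v (firstn m l)) (skipn m l)
  | BInf x => BInf (fun n => x (n + m))
  end.

Definition extends (v : vert E) (l : list (edge E)) (p : bpath) : Prop :=
  match p with
  | BFin w l' => w = v /\ exists t, l' = l ++ t
  | BInf x => sc (x 0) = v /\
              forall i, i < length l -> nth_error l i = Some (x i)
  end.

Definition basic (v : vert E) (l : list (edge E)) (F : list (edge E))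
  (p : bpath) : Prop :=
  in_bd p /\ extends v l p /\ forall e, In e F -> ~ extends v (l ++ [e]) p.

Definition basic_ok (v : vert E) (l F : list (edge E)) : Prop :=
  valid_path v l /\ forall e, In e F -> sc e = path_range v l.

(* Subsets of the boundary path space are predicates on bpath, only their
   values on boundary paths matter. *)
Definition bd_open (U : bpath -> Prop) : Prop :=
  forall y, in_bd y -> U y ->
    exists v l F, basic_ok v l F /\ basic v l F y /\
      forall z, basic v l F z -> U z.

Definition bd_clopen (U : bpath -> Prop) : Prop :=
  bd_open U /\ bd_open (fun y => ~ U y).

Definition inG (g : bpath * Z * bpath) : Prop :=
  let '(x, k, y) := g in
  in_bd x /\ in_bd y /\
  exists m n : nat, len_ge x m /\ len_ge y n /\
    k = (Z.of_nat m - Z.of_nat n)%Z /\ bshift m x = bshift n y.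

Definition gr (g : bpath * Z * bpath) : bpath := fst (fst g).
Definition gs (g : bpath * Z * bpath) : bpath := snd g.

Definition Orb (x : bpath) (z : bpath) : Prop :=
  exists g, inG g /\ gs g = x /\ gr g = z.

End G.

(* Main.v *)
Require Import Defs.
From Stdlib Require Import List ZArith.
From Stdlib Require Import Lia Classical FunctionalExtensionality ClassicalEpsilon.
Import ListNotations.
Arguments BFin {E} _ _.
Arguments BInf {E} _.
Arguments valid_path {E} _ _.
Arguments path_range {E} _ _.
Arguments out_finite {E} _.
Arguments is_sink {E} _.
Arguments is_source {E} _.
Arguments singular {E} _.


Definition start {E : graph} (p : bpath E) : vert E :=
  match p with BFin w _ => w | BInf x => sc (x 0) end.

Fixpoint prep {E : graph} (l : list (edge E)) (y : nat -> edge E) : nat -> edge E :=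
  match l with
  | [] => y
  | a :: l' => fun n => match n with 0 => a | S n' => prep l' y n' end
  end.

Definition catv {E : graph} (v : vert E) (l : list (edge E)) (p : bpath E) : bpath E :=
  match p with
  | BFin _ l' => BFin v (l ++ l')
  | BInf x => BInf (prep l x)
  end.

Lemma valid_app {E : graph} (v : vert E) a b :
  valid_path v (a ++ b) <-> valid_path v a /\ valid_path (path_range v a) b.
Proof.
  revert v; induction a as [|e a IH]; intros v; simpl.
  - tauto.
  - rewrite IH. tauto.
Qed.

Lemma range_app {E : graph} (v : vert E) a b :
  path_range v (a ++ b) = path_range (path_range v a) b.
Proof. revert v; induction a; simpl; auto. Qed.

Lemma prep_app {E : graph} (a b : list (edge E)) y n :
  prep (a ++ b) y n = prep a (prep b y) n.
Proof.
  revert n; induction a as [|e a IH]; intros n; simpl; auto.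
  destruct n; auto.
Qed.

Lemma prep_drop {E : graph} (a : list (edge E)) y n :
  prep a y (n + length a) = y n.
Proof.
  revert n; induction a as [|e a IH]; intros n; simpl.
  - f_equal; lia.
  - rewrite Nat.add_succ_r. apply IH.
Qed.

Lemma prep_lt {E : graph} (a : list (edge E)) y n :
  n < length a -> nth_error a n = Some (prep a y n).
Proof.
  revert n; induction a as [|e a IH]; intros n H; simpl in *.
  - lia.
  - destruct n; simpl; auto. apply IH. lia.
Qed.

Lemma prep_at {E : graph} (A B : list (edge E)) a y :
  prep (A ++ a :: B) y (length A) = a.
Proof.
  induction A; simpl; auto.
Qed.

Lemma prep_prefix {E : graph} (l1 l2 : list (edge E)) y :
  (forall n, prep l1 y n = prep l2 y n) -> length l1 <= length l2 ->
  l2 = l1 ++ skipn (length l1) l2 /\ forall n, y n = prep (skipn (length l1) l2) y n.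
Proof.
  revert l2; induction l1 as [|a l1 IH]; intros l2 H Hl; simpl in *.
  - auto.
  - destruct l2 as [|b l2]; simpl in *; [lia|].
    pose proof (H 0) as H0; simpl in H0; subst b.
    destruct (IH l2) as [E1 E2].
    + intros n. exact (H (S n)).
    + lia.
    + split; auto. rewrite <- E1. auto.
Qed.

Lemma sc_prep0 {E : graph} (v : vert E) (m : list (edge E)) x :
  valid_path v m -> sc (x 0) = path_range v m -> sc (prep m x 0) = v.
Proof.
  destruct m as [|a m]; simpl; intros; tauto.
Qed.

Lemma in_bd_prep {E : graph} (v : vert E) (m : list (edge E)) x :
  valid_path v m -> in_bd (BInf x) -> sc (x 0) = path_range v m ->
  in_bd (BInf (prep m x)).
Proof.
  revert v; induction m as [|a m IH]; intros v Hv Hx Hs; simpl in *; auto.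
  destruct Hv as [Ha Hv].
  intros n. destruct n.
  - symmetry. eapply sc_prep0; eauto.
  - specialize (IH _ Hv Hx Hs). apply IH.
Qed.

Lemma firstskip_app {A : Type} (M r : list A) :
  firstn (length M) (M ++ r) = M /\ skipn (length M) (M ++ r) = r.
Proof. induction M; simpl; auto. destruct IHM as [-> ->]; auto. Qed.

Lemma in_bd_catv {E : graph} (v : vert E) (M : list (edge E)) z :
  valid_path v M -> in_bd z -> start z = path_range v M -> in_bd (catv v M z).
Proof.
  destruct z as [w l|x]; simpl; intros HM Hz Hs.
  - destruct Hz as [Hz1 Hz2]. subst w. rewrite valid_app, range_app. auto.
  - eapply in_bd_prep; eauto.
Qed.

Lemma start_catv {E : graph} (v : vert E) (M : list (edge E)) z :
  valid_path v M -> start z = path_range v M -> start (catv v M z) = v.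
Proof.
  destruct z as [w l|x]; simpl; intros; auto. apply sc_prep0; auto.
Qed.

Lemma bshift_catv {E : graph} (v : vert E) (M : list (edge E)) z :
  start z = path_range v M -> bshift (length M) (catv v M z) = z.
Proof.
  destruct z as [w l|x]; simpl; intros Hs.
  - destruct (firstskip_app M l) as [-> ->]. congruence.
  - f_equal. apply functional_extensionality. intros n. apply prep_drop.
Qed.

Lemma len_ge_catv {E : graph} (v : vert E) (M : list (edge E)) z :
  len_ge (catv v M z) (length M).
Proof. destruct z; simpl; auto. rewrite length_app. lia. Qed.

Lemma orb_catv {E : graph} (v : vert E) (M1 M2 : list (edge E)) z :
  valid_path v M1 -> valid_path v M2 -> in_bd z ->
  start z = path_range v M1 -> start z = path_range v M2 ->
  Orb (catv v M1 z) (catv v M2 z).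
Proof.
  intros H1 H2 Hz S1 S2.
  exists (catv v M2 z, (Z.of_nat (length M2) - Z.of_nat (length M1))%Z, catv v M1 z).
  simpl. split; auto.
  split; [apply in_bd_catv; auto|]. split; [apply in_bd_catv; auto|].
  exists (length M2), (length M1). split; [apply len_ge_catv|]. split; [apply len_ge_catv|].
  split; auto. rewrite !bshift_catv; auto.
Qed.

Lemma extends_start {E : graph} (v : vert E) y : extends v [] y <-> start y = v.
Proof.
  destruct y; simpl; split; intros H.
  - tauto.
  - split; auto. exists l; auto.
  - tauto.
  - split; auto. intros; simpl in *; lia.
Qed.

Lemma extends_catv {E : graph} (v : vert E) (l R : list (edge E)) z :
  valid_path v (l ++ R) -> start z = path_range v (l ++ R) ->
  extends v l (catv v (l ++ R) z).
Proof.
  destruct z as [w m|x]; simpl; intros H Hs.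
  - split; auto. exists (R ++ m). rewrite app_assoc; auto.
  - split. apply sc_prep0; auto.
    intros i Hi. rewrite prep_app.
    rewrite <- prep_lt by auto. auto.
Qed.

Lemma not_extends_catv {E : graph} (v : vert E) (l R : list (edge E)) e f z :
  extends v (l ++ [f]) (catv v (l ++ e :: R) z) -> f = e.
Proof.
  destruct z as [w m|x]; simpl; intros [H1 H2].
  - destruct H2 as [t Ht]. rewrite <- !app_assoc in Ht. apply app_inv_head in Ht.
    simpl in Ht. congruence.
  - specialize (H2 (length l)). rewrite length_app in H2. simpl in H2.
    rewrite nth_error_app2 in H2 by lia. rewrite Nat.sub_diag in H2. simpl in H2.
    rewrite prep_at in H2. specialize (H2 ltac:(lia)). congruence.
Qed.



Lemma bd_from {E : graph} (w : vert E) : exists z, in_bd z /\ start z = w.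
Proof.
  destruct (classic (exists m, valid_path w m /\ singular (path_range w m))) as [[m [H1 H2]]|Hn].
  - exists (BFin w m). simpl; auto.
  - assert (Hns : forall m, valid_path w m -> exists e, sc e = path_range w m).
    { intros m Hm. apply NNPP; intro C. apply Hn. exists m; split; auto. left.
      intros e He. apply C; eauto. }
    destruct (Hns [] I) as [e0 _].
    set (nxt := fun u => epsilon (inhabits e0) (fun e => sc e = u)).
    set (V := fun k => Nat.iter k (fun u => rg (nxt u)) w).
    assert (HV : forall k, exists m, valid_path w m /\ path_range w m = V k /\ sc (nxt (V k)) = V k).
    { induction k as [|k IH].
      - exists []. simpl. split; auto. split; auto.
        apply (epsilon_spec (inhabits e0) (fun e => sc e = w)). apply (Hns [] I).
      - destruct IH as [m [Hm1 [Hm2 Hm3]]].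
        assert (Hv' : valid_path w (m ++ [nxt (V k)])).
        { apply valid_app. split; auto. simpl. split; auto. congruence. }
        assert (Hr' : path_range w (m ++ [nxt (V k)]) = V (S k)).
        { rewrite range_app. simpl. reflexivity. }
        exists (m ++ [nxt (V k)]). split; auto. split; auto.
        destruct (Hns _ Hv') as [e1 He1].
        apply (epsilon_spec (inhabits e0) (fun e => sc e = V (S k))).
        exists e1. congruence. }
    exists (BInf (fun k => nxt (V k))). simpl. split.
    + intros n. destruct (HV (S n)) as [mm [_ [_ H]]]. etransitivity; [|symmetry; exact H]. reflexivity.
    + destruct (HV 0) as [mm [_ [_ H]]]. exact H.
Qed.

Definition pre {E : graph} (m : nat) (p : bpath E) : list (edge E) :=
  match p with BFin _ l => firstn m l | BInf x => map x (seq 0 m) end.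

Lemma pre_inf {E : graph} (x : nat -> edge E) m j :
  (forall n, rg (x n) = sc (x (S n))) ->
  valid_path (sc (x j)) (map x (seq j m)) /\ path_range (sc (x j)) (map x (seq j m)) = sc (x (j + m)).
Proof.
  intros Hx. revert j; induction m as [|m IH]; intros j; simpl.
  - rewrite Nat.add_0_r. auto.
  - destruct (IH (S j)) as [H1 H2]. rewrite Hx. split; auto.
    rewrite H2. f_equal. f_equal. lia.
Qed.

Lemma pre_valid {E : graph} (p : bpath E) m :
  in_bd p -> len_ge p m ->
  valid_path (start p) (pre m p) /\ path_range (start p) (pre m p) = start (bshift m p)
  /\ length (pre m p) = m.
Proof.
  destruct p as [v l|x]; simpl; intros Hp Hm.
  - destruct Hp as [Hp _]. rewrite <- (firstn_skipn m l) in Hp.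
    apply valid_app in Hp. destruct Hp as [Hp _]. split; auto. split; auto.
    rewrite length_firstn. lia.
  - destruct (pre_inf x m 0 Hp) as [H1 H2]. split; auto. split; auto.
    rewrite length_map, length_seq. auto.
Qed.

Lemma map_seq_eq {B : Type} (x y : nat -> B) m j :
  map x (seq j m) = map y (seq j m) -> forall k, j <= k < j + m -> x k = y k.
Proof.
  revert j; induction m as [|m IH]; intros j H k Hk; simpl in *.
  - lia.
  - injection H as H1 H2. destruct (Nat.eq_dec k j) as [->|Hne]; auto.
    apply (IH (S j)); auto. lia.
Qed.

Lemma recon {E : graph} (p q : bpath E) m :
  start p = start q -> pre m p = pre m q -> bshift m p = bshift m q -> p = q.
Proof.
  destruct p as [v l|x], q as [v' l'|y]; simpl; intros Hs Hp Hb; try discriminate.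
  - subst v'. injection Hb as _ Hb. rewrite <- (firstn_skipn m l), <- (firstn_skipn m l').
    congruence.
  - injection Hb as Hb. f_equal. apply functional_extensionality. intros k.
    destruct (Nat.lt_ge_cases k m) as [Hk|Hk].
    + eapply map_seq_eq; [exact Hp|lia].
    + pose proof (equal_f Hb (k - m)) as Hb'. simpl in Hb'.
      replace (k - m + m) with k in Hb' by lia. exact Hb'.
Qed.

Lemma clopen_start {E : graph} (v : vert E) : bd_clopen (fun y => start y = v).
Proof.
  split.
  - intros y Hy Hs. exists v, [], []. split; [split; simpl; auto; intros e []|].
    split.
    + split; auto. split; [apply extends_start; auto|]. intros e [].
    + intros z [_ [Hz _]]. apply extends_start; auto.
  - intros y Hy Hs. exists (start y), [], []. split; [split; simpl; auto; intros e []|].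
    split.
    + split; auto. split; [apply extends_start; auto|]. intros e [].
    + intros z [_ [Hz _]]. apply extends_start in Hz. congruence.
Qed.

Lemma notT_main {E : graph} (v : vert E) :
  (forall w l1 l2, valid_path v l1 -> valid_path v l2 -> path_range v l1 = w ->
     path_range v l2 = w -> l1 = l2) ->
  forall x y, in_bd x -> in_bd y -> start x = v -> start y = v -> Orb x y -> x = y.
Proof.
  intros HT x y Hx Hy Sx Sy [[[y' k] x'] [HG [Hgs Hgr]]].
  unfold gs, gr in Hgs, Hgr; simpl in Hgs, Hgr. subst x' y'.
  destruct HG as [_ [_ [m [n [Hm [Hn [_ Hb]]]]]]].
  destruct (pre_valid y m Hy Hm) as [V1 [R1 L1]].
  destruct (pre_valid x n Hx Hn) as [V2 [R2 L2]].
  rewrite Sy in V1, R1. rewrite Sx in V2, R2.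
  assert (Hpre : pre m y = pre n x).
  { apply (HT _ _ _ V1 V2 R1). rewrite R2. congruence. }
  assert (m = n) by (rewrite <- L1, <- L2, Hpre; auto). subst n.
  symmetry. apply (recon y x m); congruence.
Qed.


Lemma in_path_rg {E : graph} (w : vert E) l e :
  valid_path w l -> In e l -> rg e = path_range w l \/ exists e', In e' l /\ sc e' = rg e.
Proof.
  revert w; induction l as [|a l IH]; intros w Hv Hin; simpl in *; [tauto|].
  destruct Hv as [Ha Hv].
  destruct Hin as [<-|Hin].
  - destruct l as [|b l]; simpl in *; [left; auto|].
    right. exists b. split; auto. destruct Hv; auto.
  - destruct (IH _ Hv Hin) as [H|[e' [H1 H2]]]; auto.
    right. exists e'. auto.
Qed.

Lemma notL_main {E : graph} (v : vert E) l :
  l <> [] -> valid_path v l -> path_range v l = v ->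
  (forall i ei e, nth_error l i = Some ei -> sc e = sc ei -> e = ei) ->
  forall x y, in_bd x -> in_bd y -> start x = v -> start y = v -> x = y.
Proof.
  intros Hne Hv Hr Hno.
  set (D := fun u => exists ei, In ei l /\ sc ei = u).
  assert (Huniq : forall u, D u -> forall e, sc e = u -> In e l /\ forall e', sc e' = u -> e' = e).
  { intros u [ei [Hi Hs]] e He.
    destruct (In_nth_error _ _ Hi) as [i Hi'].
    assert (e = ei) by (apply (Hno i); congruence). subst e.
    split; auto. intros e' He'. apply (Hno i); congruence. }
  assert (Hclos : forall e, In e l -> D (rg e)).
  { intros e Hin. destruct (in_path_rg v l e Hv Hin) as [H|H]; auto.
    destruct l as [|a l']; [congruence|]. exists a. split; [left; auto|].
    simpl in Hv. destruct Hv as [Ha _]. rewrite H, Hr. auto. }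
  assert (Dv : D v).
  { destruct l as [|a l']; [congruence|]. exists a. split; [left; auto|]. apply Hv. }
  assert (Hnsing : forall u, D u -> ~ singular u).
  { intros u Du [Hs|Hs].
    - destruct Du as [ei [_ He]]. apply (Hs ei He).
    - apply Hs. destruct Du as [ei [Hi He]]. exists [ei]. intros e He'.
      left. symmetry. apply (proj2 (Huniq u (ex_intro _ ei (conj Hi He)) ei He)). auto. }
  assert (Hfin : forall m u, D u -> valid_path u m -> D (path_range u m)).
  { induction m as [|a m IH]; intros u Du Hm; simpl in *; auto.
    destruct Hm as [Ha Hm]. apply IH; auto. apply Hclos.
    apply (Huniq u Du a Ha). }
  assert (Hinf : forall p, in_bd p -> start p = v -> exists x, p = BInf x).
  { intros [w m|x] Hp Hs; simpl in *; [|eauto].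
    subst w. destruct Hp as [Hp1 Hp2]. exfalso. apply (Hnsing _ (Hfin m v Dv Hp1) Hp2). }
  intros x y Hx Hy Sx Sy.
  destruct (Hinf x Hx Sx) as [f ->]. destruct (Hinf y Hy Sy) as [g ->].
  simpl in *.
  assert (Hk : forall k, f k = g k /\ D (sc (f k))).
  { induction k as [|k [IH1 IH2]].
    - rewrite Sx. split; auto.
      destruct (Huniq v Dv (f 0) Sx) as [_ H]. symmetry. apply H; auto.
    - assert (Dn : D (sc (f (S k)))).
      { rewrite <- Hx. apply Hclos. apply (Huniq _ IH2 (f k) eq_refl). }
      split; auto.
      destruct (Huniq _ Dn (f (S k)) eq_refl) as [_ H]. symmetry. apply H.
      rewrite <- Hx, <- Hy, IH1. auto. }
  f_equal. apply functional_extensionality. intros k. apply Hk.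
Qed.

Lemma orb_bd {E : graph} (x y : bpath E) : Orb x y -> in_bd x /\ in_bd y.
Proof.
  intros [[[y' k] x'] [HG [Hgs Hgr]]]. unfold gs, gr in *; simpl in *. subst.
  destruct HG as [H1 [H2 _]]. auto.
Qed.

Lemma part1_fwd {E : graph} :
  (forall U : bpath E -> Prop,
      bd_clopen U -> (exists y, in_bd y /\ U y) ->
      exists x y, in_bd x /\ U x /\ U y /\ x <> y /\ Orb x y) ->
  condL E /\ condT E.
Proof.
  intros H. split.
  - apply NNPP. intros HnL. unfold condL in HnL.
    apply not_all_ex_not in HnL. destruct HnL as [v HnL].
    apply not_all_ex_not in HnL. destruct HnL as [l HnL].
    apply imply_to_and in HnL. destruct HnL as [Hne HnL].
    apply imply_to_and in HnL. destruct HnL as [Hv HnL].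
    apply imply_to_and in HnL. destruct HnL as [Hr HnL].
    assert (Hno : forall i ei e, nth_error l i = Some ei -> sc e = sc ei -> e = ei).
    { intros i ei e H1 H2. apply NNPP. intro C. apply HnL. eauto 6. }
    destruct (bd_from v) as [z [Hz Sz]].
    destruct (H (fun y => start y = v) (clopen_start v) (ex_intro _ z (conj Hz Sz)))
      as [x [y [Hx [Ux [Uy [Hxy Ho]]]]]].
    apply Hxy. apply (notL_main v l Hne Hv Hr Hno); auto.
    exact (proj2 (orb_bd x y Ho)).
  - apply NNPP. intros HnT. unfold condT in HnT.
    apply not_all_ex_not in HnT. destruct HnT as [v HnT].
    assert (HT : forall w l1 l2, valid_path v l1 -> valid_path v l2 -> path_range v l1 = w ->
       path_range v l2 = w -> l1 = l2).
    { intros w l1 l2 H1 H2 H3 H4. apply NNPP. intro C. apply HnT. exists w, l1, l2. tauto. }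
    destruct (bd_from v) as [z [Hz Sz]].
    destruct (H (fun y => start y = v) (clopen_start v) (ex_intro _ z (conj Hz Sz)))
      as [x [y [Hx [Ux [Uy [Hxy Ho]]]]]].
    apply Hxy. apply (notT_main v HT x y); auto.
    exact (proj2 (orb_bd x y Ho)).
Qed.


Lemma catv_eq {E : graph} (v : vert E) pre l1 l2 z :
  catv v (pre ++ l1) z = catv v (pre ++ l2) z ->
  l1 = l2 \/ exists x, z = BInf x /\ forall n, prep l1 x n = prep l2 x n.
Proof.
  destruct z as [w m|x]; simpl; intros H.
  - left. injection H as H. apply app_inv_tail in H. apply app_inv_head in H. auto.
  - right. exists x. split; auto. intros n. injection H as H.
    pose proof (equal_f H (n + length pre)) as H'. rewrite !prep_app, !prep_drop in H'. auto.
Qed.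

Lemma eqlen {E : graph} (l1 l2 : list (edge E)) x :
  length l1 = length l2 -> (forall n, prep l1 x n = prep l2 x n) -> l1 = l2.
Proof.
  intros Hl H. destruct (prep_prefix l1 l2 x H ltac:(lia)) as [H1 _].
  rewrite skipn_all2 in H1 by lia. rewrite app_nil_r in H1. auto.
Qed.

Lemma sep_lt {E : graph} (HL : condL E) (u w : vert E) l1 l2 :
  valid_path u l1 -> valid_path u l2 -> path_range u l1 = w -> path_range u l2 = w ->
  l1 <> l2 -> length l1 < length l2 ->
  exists z, in_bd z /\ start z = w /\ forall v pre, catv v (pre ++ l1) z <> catv v (pre ++ l2) z.
Proof.
  intros V1 V2 R1 R2 Hne Hlt.
  destruct (bd_from w) as [z0 [Hz0 Sz0]].
  destruct (classic (forall v pre, catv v (pre ++ l1) z0 <> catv v (pre ++ l2) z0)) as [Hok|Hno].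
  { exists z0; auto. }
  apply not_all_ex_not in Hno. destruct Hno as [v0 Hno].
  apply not_all_ex_not in Hno. destruct Hno as [pre0 Hno]. apply NNPP in Hno.
  destruct (catv_eq v0 pre0 l1 l2 z0 Hno) as [C|[x [-> Hx]]]; [contradiction|].
  destruct (prep_prefix l1 l2 x Hx ltac:(lia)) as [Hl2 _].
  set (g := skipn (length l1) l2) in *.
  assert (Hg : g <> []).
  { intro C. rewrite C, app_nil_r in Hl2. auto. }
  assert (Vg : valid_path w g /\ path_range w g = w).
  { rewrite Hl2 in V2, R2. apply valid_app in V2. rewrite range_app in R2.
    rewrite R1 in V2, R2. tauto. }
  destruct Vg as [Vg Rg].
  destruct (HL w g Hg Vg Rg) as [i [gi [f [Hi [Hf Hfg]]]]].
  destruct (nth_error_split g i Hi) as [A [B [HAB HA]]].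
  assert (Hsgi : sc gi = path_range w A).
  { rewrite HAB in Vg. apply valid_app in Vg. destruct Vg as [_ Vg]. simpl in Vg. tauto. }
  destruct (bd_from (rg f)) as [z2 [Hz2 Sz2]].
  assert (VA : valid_path w (A ++ [f])).
  { apply valid_app. split.
    - rewrite HAB in Vg. apply valid_app in Vg. tauto.
    - simpl. split; auto. congruence. }
  assert (RA : start z2 = path_range w (A ++ [f])).
  { rewrite range_app. simpl. auto. }
  exists (catv w (A ++ [f]) z2). split; [apply in_bd_catv; auto|].
  split; [apply start_catv; auto|].
  intros v pre Heq.
  destruct (catv_eq v pre l1 l2 _ Heq) as [C|[x' [Hz' Hx']]]; [contradiction|].
  destruct (prep_prefix l1 l2 x' Hx' ltac:(lia)) as [_ Hper].
  fold g in Hper.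
  destruct z2 as [w2 m2|x2]; simpl in Hz'; [discriminate|].
  injection Hz' as Hz'. subst x'.
  specialize (Hper (length A)).
  rewrite (prep_at A [] f x2) in Hper.
  rewrite HAB in Hper. rewrite prep_at in Hper. auto.
Qed.

Lemma sep {E : graph} (HL : condL E) (u w : vert E) l1 l2 :
  valid_path u l1 -> valid_path u l2 -> path_range u l1 = w -> path_range u l2 = w ->
  l1 <> l2 ->
  exists z, in_bd z /\ start z = w /\ forall v pre, catv v (pre ++ l1) z <> catv v (pre ++ l2) z.
Proof.
  intros V1 V2 R1 R2 Hne.
  destruct (lt_eq_lt_dec (length l1) (length l2)) as [[Hlt|Heq]|Hgt].
  - eapply sep_lt; eauto.
  - destruct (bd_from w) as [z0 [Hz0 Sz0]]. exists z0. split; auto. split; auto.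
    intros v pre H. destruct (catv_eq v pre l1 l2 z0 H) as [C|[x [_ Hx]]]; auto.
    apply Hne. apply (eqlen l1 l2 x Heq Hx).
  - destruct (sep_lt HL u w l2 l1 V2 V1 R2 R1 (fun C => Hne (eq_sym C)) Hgt) as [z [H1 [H2 H3]]].
    exists z. split; [exact H1|]. split; [exact H2|]. intros v pre H. apply (H3 v pre). symmetry. exact H.
Qed.


Lemma list_map_seq {B : Type} (x : nat -> B) (l : list B) j :
  (forall i, i < length l -> nth_error l i = Some (x (j + i))) -> l = map x (seq j (length l)).
Proof.
  revert j; induction l as [|a l IH]; intros j H; simpl; auto.
  pose proof (H 0 ltac:(simpl; lia)) as H0. simpl in H0. rewrite Nat.add_0_r in H0.
  injection H0 as ->. f_equal. apply IH. intros i Hi.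
  specialize (H (S i) ltac:(simpl; lia)). simpl in H. rewrite H. f_equal. f_equal. lia.
Qed.

Lemma find_edge {E : graph} (HT : condT E) (v : vert E) l F y0 :
  valid_path v l -> basic v l F y0 -> exists e, sc e = path_range v l /\ ~ In e F.
Proof.
  intros Hvl [Hin [Hext Hnot]].
  destruct y0 as [w m|x]; simpl in *.
  - destruct Hext as [-> [t ->]]. destruct t as [|e t].
    + rewrite app_nil_r in Hin. destruct Hin as [_ Hsing].
      set (u := path_range v l) in *.
      destruct (HT u) as [w' [l1 [l2 [V1 [V2 [_ [_ Hne]]]]]]].
      assert (Hns : ~ is_sink u).
      { intros Hs. apply Hne. destruct l1 as [|a l1]; destruct l2 as [|b l2]; auto.
        - exfalso. destruct V2 as [Hb _]. apply (Hs b Hb).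
        - exfalso. destruct V1 as [Ha _]. apply (Hs a Ha).
        - exfalso. destruct V1 as [Ha _]. apply (Hs a Ha). }
      destruct Hsing as [Hs|Hinf]; [contradiction|].
      apply NNPP. intros C. apply Hinf. exists F. intros e He.
      apply NNPP. intros C2. apply C. eauto.
    + destruct Hin as [Hin _]. apply valid_app in Hin. destruct Hin as [_ [He _]].
      exists e. split; auto. intros HF. apply (Hnot e HF). split; auto.
      exists t. rewrite <- app_assoc. auto.
  - destruct Hext as [H0 Hpre].
    assert (Hl : l = map x (seq 0 (length l))).
    { apply list_map_seq. intros i Hi. apply Hpre; auto. }
    exists (x (length l)). split.
    + destruct (pre_inf x (length l) 0 Hin) as [_ R]. rewrite <- Hl, H0 in R. simpl in R.
      symmetry; auto.
    + intros HF. apply (Hnot _ HF). split; auto. intros i Hi.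
      rewrite length_app in Hi; simpl in Hi.
      destruct (Nat.lt_ge_cases i (length l)) as [Hlt|Hge].
      * rewrite nth_error_app1 by auto. auto.
      * assert (i = length l) by lia. subst i.
        rewrite nth_error_app2 by lia. rewrite Nat.sub_diag. auto.
Qed.

Lemma part1_bwd {E : graph} :
  condL E /\ condT E ->
  (forall U : bpath E -> Prop,
      bd_clopen U -> (exists y, in_bd y /\ U y) ->
      exists x y, in_bd x /\ U x /\ U y /\ x <> y /\ Orb x y).
Proof.
  intros [HL HT] U [HUo _] [y0 [Hy0 HUy0]].
  destruct (HUo y0 Hy0 HUy0) as (v & l & F & [Hvl HF] & Hb & HU).
  destruct (find_edge HT v l F y0 Hvl Hb) as [e [He HeF]].
  destruct (HT (rg e)) as [w [l1 [l2 [V1 [V2 [R1 [R2 Hne]]]]]]].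
  destruct (sep HL (rg e) w l1 l2 V1 V2 R1 R2 Hne) as [z [Hz [Sz Hsep]]].
  assert (HM : forall lj, valid_path (rg e) lj -> path_range (rg e) lj = w ->
     valid_path v (l ++ e :: lj) /\ start z = path_range v (l ++ e :: lj)).
  { intros lj Vj Rj. split.
    - apply valid_app. split; auto. simpl. split; auto.
    - rewrite range_app. simpl. congruence. }
  destruct (HM l1 V1 R1) as [VM1 SM1]. destruct (HM l2 V2 R2) as [VM2 SM2].
  assert (HP : forall lj, valid_path v (l ++ e :: lj) -> start z = path_range v (l ++ e :: lj) ->
     in_bd (catv v (l ++ e :: lj) z) /\ U (catv v (l ++ e :: lj) z)).
  { intros lj VM SM. assert (Hb' : in_bd (catv v (l ++ e :: lj) z)) by (apply in_bd_catv; auto).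
    split; auto. apply HU. split; auto. split.
    - apply extends_catv; auto.
    - intros f Hf Hext. apply not_extends_catv in Hext. subst f. contradiction. }
  destruct (HP l1 VM1 SM1) as [B1 U1]. destruct (HP l2 VM2 SM2) as [B2 U2].
  exists (catv v (l ++ e :: l1) z), (catv v (l ++ e :: l2) z).
  split; auto. split; auto. split; auto. split.
  - intros C. apply (Hsep v (l ++ [e])). rewrite <- !app_assoc. exact C.
  - apply orb_catv; auto.
Qed.

Lemma part1 {E : graph} :
  ((forall U : bpath E -> Prop,
      bd_clopen U -> (exists y, in_bd y /\ U y) ->
      exists x y, in_bd x /\ U x /\ U y /\ x <> y /\ Orb x y)
   <-> (condL E /\ condT E)).
Proof. split; [apply part1_fwd | apply part1_bwd]. Qed.


Lemma orb_fin {E : graph} (v w : vert E) l m :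
  in_bd (BFin v l) -> valid_path w m -> path_range w m = path_range v l ->
  Orb (BFin v l) (BFin w m).
Proof.
  intros Hx Vm Rm.
  exists (BFin w m, (Z.of_nat (length m) - Z.of_nat (length l))%Z, BFin v l).
  unfold gs, gr; simpl. split; auto.
  destruct Hx as [Hx1 Hx2].
  split; [split; auto; rewrite Rm; auto|]. split; [split; auto|].
  exists (length m), (length l). simpl. split; auto. split; auto. split; auto.
  rewrite !firstn_all, !skipn_all. congruence.
Qed.

Lemma orb_inf {E : graph} (x y : nat -> edge E) p q :
  in_bd (BInf x) -> in_bd (BInf y) -> (forall k, y (k + p) = x (k + q)) ->
  Orb (BInf x) (BInf y).
Proof.
  intros Hx Hy H.
  exists (BInf y, (Z.of_nat p - Z.of_nat q)%Z, BInf x).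
  unfold gs, gr; simpl. split; auto.
  split; auto. split; auto. exists p, q. split; auto. split; auto. split; auto.
  f_equal. apply functional_extensionality. auto.
Qed.

Lemma binf_neq {E : graph} (f g : nat -> edge E) k : f k <> g k -> BInf f <> BInf g.
Proof. intros H C. injection C as C. subst. auto. Qed.

Lemma in_bd_shift {E : graph} (x : nat -> edge E) j :
  in_bd (BInf x) -> in_bd (BInf (fun n => x (n + j))).
Proof. simpl. intros H n. apply H. Qed.

Lemma orb_fin_inv {E : graph} (v : vert E) y :
  Orb (BFin v []) y -> exists w m, y = BFin w m /\ valid_path w m /\ path_range w m = v.
Proof.
  intros [[[y' k] x'] [HG [Hgs Hgr]]]. unfold gs, gr in *; simpl in *. subst.
  destruct HG as [Hy [_ [m [n [Hm [Hn [_ Hb]]]]]]].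
  simpl in Hn. assert (n = 0) by lia. subst n. simpl in Hb.
  destruct y as [w l|y]; simpl in *; [|discriminate].
  injection Hb as H1 H2.
  assert (Hl : length l <= m).
  { pose proof (length_skipn m l) as L. rewrite H2 in L. simpl in L. lia. }
  rewrite firstn_all2 in H1 by auto.
  exists w, l. split; auto. split; auto. apply Hy.
Qed.

Lemma orb_inf_inv {E : graph} (x : nat -> edge E) y :
  Orb (BInf x) y -> exists y' p q, y = BInf y' /\ in_bd (BInf y') /\
     forall k, y' (k + p) = x (k + q).
Proof.
  intros [[[y' k] x'] [HG [Hgs Hgr]]]. unfold gs, gr in *; simpl in *. subst.
  destruct HG as [Hy [_ [m [n [Hm [Hn [_ Hb]]]]]]].
  destruct y as [w l|y]; simpl in *; [discriminate|].
  injection Hb as Hb. exists y, m, n. split; auto. split; auto.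
  intros kk. exact (equal_f Hb kk).
Qed.

Lemma back {T : Type} (y : nat -> T) (P : T -> Prop) p :
  (forall j, p <= j -> P (y j)) -> (forall j, P (y (S j)) -> P (y j)) -> forall j, P (y j).
Proof.
  intros H1 H2.
  assert (Hd : forall d j, p <= j + d -> P (y j)).
  { induction d as [|d IH]; intros j Hj.
    - apply H1. lia.
    - apply H2. apply IH. lia. }
  intros j. apply (Hd p). lia.
Qed.

Lemma pigeon {T : Type} (A B a b c : T) :
  (a = A \/ a = B) -> (b = A \/ b = B) -> (c = A \/ c = B) -> a <> b -> a <> c -> b <> c -> False.
Proof. intros [->| ->] [->| ->] [->| ->]; congruence. Qed.

Lemma edge_list_last {E : graph} (w : vert E) m :
  m = [] \/ exists m' g, m = m' ++ [g] /\ path_range w m = rg g.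
Proof.
  destruct m as [|a m]; [left; auto|]. right.
  destruct (exists_last (l := a :: m) ltac:(discriminate)) as [m' [g Hg]].
  exists m', g. split; auto. rewrite Hg, range_app. auto.
Qed.


Definition three {E : graph} (x : bpath E) : Prop :=
  exists a b c, Orb x a /\ Orb x b /\ Orb x c /\ a <> b /\ a <> c /\ b <> c.

Lemma two_bad {E : graph} (x A B : bpath E) :
  (forall y, Orb x y -> y = A \/ y = B) -> ~ three x.
Proof.
  intros H (a & b & c & Ha & Hb & Hc & H1 & H2 & H3).
  apply (pigeon A B a b c); auto.
Qed.

Lemma fin_source_bad {E : graph} (v : vert E) :
  is_source v -> ~ three (BFin v []).
Proof.
  intros Hs. apply (two_bad _ (BFin v []) (BFin v [])). intros y Hy. left.
  destruct (orb_fin_inv v y Hy) as [w [m [-> [Vm Rm]]]].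
  destruct (edge_list_last w m) as [->|[m' [g [-> Hg]]]].
  - simpl in Rm. subst; auto.
  - exfalso. apply (Hs g). congruence.
Qed.

Lemma deg_bad {E : graph} (v : vert E) :
  degenerate E v -> exists x : bpath E, in_bd x /\ ~ three x.
Proof.
  intros [D|[D|[D|[D|[D|D]]]]].
  - destruct D as [e [He Hl]].
    assert (Hv : rg e = v) by (apply He; auto).
    exists (BInf (fun _ => e)). split; [simpl; auto|].
    apply (two_bad _ (BInf (fun _ => e)) (BInf (fun _ => e))). intros y Hy. left.
    destruct (orb_inf_inv _ y Hy) as [y' [p [q [-> [Hy' Hk]]]]].
    f_equal. apply functional_extensionality. intros j.
    apply (back y' (fun g => g = e) p).
    + intros j' Hj'. replace j' with ((j' - p) + p) by lia. rewrite Hk. auto.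
    + intros j' H. apply He. rewrite Hy', H. congruence.
  - destruct D as [e [f [He [Hl Hf]]]].
    assert (Hv : rg e = v) by (apply He; auto).
    exists (BInf (fun _ => e)). split; [simpl; auto|].
    apply (two_bad _ (BInf (fun _ => e)) (BInf (prep [f] (fun _ => e)))). intros y Hy.
    destruct (orb_inf_inv _ y Hy) as [y' [p [q [-> [Hy' Hk]]]]].
    assert (HS : forall j, y' (S j) = e).
    { apply (back (fun j => y' (S j)) (fun g => g = e) p).
      + intros j' Hj'. replace (S j') with ((S j' - p) + p) by lia. rewrite Hk. auto.
      + intros j' H. simpl in H. simpl.
        assert (rg (y' (S j')) = v) by (rewrite Hy', H; congruence).
        apply He in H0. destruct H0 as [H0|H0]; auto.
        exfalso. apply (Hf (y' j')). rewrite Hy', H0. auto. }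
    assert (H0 : y' 0 = e \/ y' 0 = f).
    { apply He. rewrite Hy', HS. congruence. }
    destruct H0 as [H0|H0]; [left|right]; f_equal; apply functional_extensionality;
      intros [|j]; simpl; auto.
  - destruct D as [w [e [f [Hwv [He [Hse [Hf Hsf]]]]]]].
    assert (Hre : rg e = v) by (apply He; auto).
    assert (Hrf : rg f = w) by (apply Hf; auto).
    assert (Hef : e <> f) by (intro C; subst; congruence).
    set (alt := fix alt (n : nat) : bool := match n with 0 => true | S n => negb (alt n) end).
    set (x := fun k => if alt k then f else e).
    assert (Hx : in_bd (BInf x)).
    { simpl. intros n. unfold x. simpl. destruct (alt n); simpl; congruence. }
    assert (Hef_val : forall k, x k = e \/ x k = f).
    { intros k. unfold x. destruct (alt k); auto. }
    assert (Hdet : forall y1 y2 : nat -> edge E, in_bd (BInf y1) -> in_bd (BInf y2) ->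
       (forall j, y1 j = e \/ y1 j = f) -> (forall j, y2 j = e \/ y2 j = f) ->
       y1 0 = y2 0 -> BInf y1 = BInf y2).
    { intros y1 y2 H1 H2 V1 V2 H0. f_equal. apply functional_extensionality.
      intros j. induction j as [|j IH]; auto.
      simpl in H1, H2. pose proof (H1 j) as A1. pose proof (H2 j) as A2.
      rewrite IH in A1. rewrite A1 in A2.
      destruct (V1 (S j)) as [B1|B1]; destruct (V2 (S j)) as [B2|B2]; try congruence;
        exfalso; rewrite B1, B2 in A2; congruence. }
    exists (BInf x). split; auto.
    apply (two_bad _ (BInf x) (BInf (fun n => x (n + 1)))). intros y Hy.
    destruct (orb_inf_inv _ y Hy) as [y' [p [q [-> [Hy' Hk]]]]].
    assert (Hv : forall j, y' j = e \/ y' j = f).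
    { apply (back y' (fun g => g = e \/ g = f) p).
      + intros j' Hj'. replace j' with ((j' - p) + p) by lia. rewrite Hk. auto.
      + intros j' [H|H]; simpl in Hy'; pose proof (Hy' j') as R; rewrite H in R.
        * right. apply Hf. congruence.
        * left. apply He. congruence. }
    destruct (Hv 0) as [H0|H0].
    + right. apply Hdet.
      * auto.
      * apply in_bd_shift; auto.
      * auto.
      * intros j. apply Hef_val.
      * rewrite H0. unfold x. simpl. auto.
    + left. apply Hdet; auto.

  - destruct D as [Hinf Hs]. exists (BFin v []). split.
    + simpl. split; auto. right; auto.
    + apply fin_source_bad; auto.
  - destruct D as [Hsing [f [Hf Hsf]]].
    exists (BFin v []). split; [simpl; auto|].
    apply (two_bad _ (BFin v []) (BFin (sc f) [f])). intros y Hy.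
    destruct (orb_fin_inv v y Hy) as [w [m [-> [Vm Rm]]]].
    destruct (edge_list_last w m) as [->|[m' [g [-> Hg]]]].
    + simpl in Rm. subst; auto.
    + assert (g = f) by (apply Hf; congruence). subst g.
      destruct (edge_list_last w m') as [->|[m'' [h [-> Hh]]]].
      * right. simpl in Vm. destruct Vm as [<- _]. auto.
      * exfalso. apply valid_app in Vm. destruct Vm as [_ Vm].
        simpl in Vm. destruct Vm as [Vm _]. apply (Hsf h). congruence.
  - destruct D as [Hsink Hs]. exists (BFin v []). split.
    + simpl. split; auto. left; auto.
    + apply fin_source_bad; auto.
Qed.


Lemma fin_good {E : graph} (HD : forall v : vert E, ~ degenerate E v) (v : vert E) l :
  in_bd (BFin v l) -> three (BFin v l).
Proof.
  intros Hx. set (u := path_range v l).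
  assert (Hu : singular u) by apply Hx.
  assert (Hf : exists f, rg f = u).
  { apply NNPP. intros C. apply (HD u). right; right; right.
    assert (Hs : is_source u) by (intros f Hf; apply C; eauto).
    destruct Hu as [Hu|Hu]; [right; right; auto | left; auto]. }
  destruct Hf as [f Hf].
  assert (Orb0 : Orb (BFin v l) (BFin u [])) by (apply orb_fin; simpl; auto).
  assert (Orb1 : Orb (BFin v l) (BFin (sc f) [f])) by (apply orb_fin; simpl; auto).
  destruct (classic (exists g, rg g = u /\ g <> f)) as [[g [Hg Hgf]]|Hno].
  - exists (BFin u []), (BFin (sc f) [f]), (BFin (sc g) [g]).
    split; auto. split; auto. split; [apply orb_fin; simpl; auto|].
    split; [congruence|]. split; [congruence|]. intros C; injection C; auto.
  - assert (Hns : ~ is_source (sc f)).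
    { intros Hs. apply (HD u). right; right; right; right; left. split; auto.
      exists f. split; auto. intros g; split; intros H; [|congruence].
      apply NNPP; intros C; apply Hno; eauto. }
    assert (Hh : exists h, rg h = sc f).
    { apply NNPP; intros C; apply Hns; intros h Hh; apply C; eauto. }
    destruct Hh as [h Hh].
    exists (BFin u []), (BFin (sc f) [f]), (BFin (sc h) [h; f]).
    split; auto. split; auto. split; [apply orb_fin; simpl; auto|].
    split; [congruence|]. split; [congruence|]. intros C; injection C; intros; discriminate.
Qed.

Lemma loop_good {E : graph} (HD : forall v : vert E, ~ degenerate E v) (x : nat -> edge E) e :
  in_bd (BInf x) -> (forall k, x (S k) = e) -> three (BInf x).
Proof.
  intros Hx He.
  assert (Hl : rg e = sc e).
  { rewrite <- (He 0) at 1. rewrite Hx, He. auto. }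
  set (v := sc e).
  assert (Hc : in_bd (BInf (fun _ : nat => e))) by (simpl; auto).
  assert (Horb : forall L, valid_path (sc (hd e L)) L -> path_range (sc (hd e L)) L = v ->
     Orb (BInf x) (BInf (prep L (fun _ => e)))).
  { intros L VL RL. apply (orb_inf _ _ (length L) 1); auto.
    - eapply in_bd_prep; eauto; simpl; auto.
    - intros k. rewrite prep_drop. rewrite Nat.add_1_r. auto. }
  assert (Hg : exists g, rg g = v /\ g <> e).
  { apply NNPP. intros C. apply (HD v). left. exists e. split; auto.
    intros g. split; intros H; [|subst; auto].
    apply NNPP; intros C2; apply C; eauto. }
  destruct Hg as [g [Hg Hge]].
  assert (O0 : Orb (BInf x) (BInf (prep [] (fun _ => e)))) by (apply Horb; simpl; auto).
  assert (O1 : Orb (BInf x) (BInf (prep [g] (fun _ => e)))) by (apply Horb; simpl; auto).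
  destruct (classic (exists h, rg h = v /\ h <> e /\ h <> g)) as [[h [Hh [Hhe Hhg]]]|Hno].
  - exists (BInf (prep [] (fun _ => e))), (BInf (prep [g] (fun _ => e))),
      (BInf (prep [h] (fun _ => e))).
    split; auto. split; auto. split; [apply Horb; simpl; auto|].
    split; [apply (binf_neq _ _ 0); simpl; auto|].
    split; [apply (binf_neq _ _ 0); simpl; auto|].
    apply (binf_neq _ _ 0); simpl; auto.
  - assert (Hns : ~ is_source (sc g)).
    { intros Hs. apply (HD v). right; left. exists e, g. split; [|split; auto].
      intros h. split; intros H.
      + destruct (classic (h = e)); auto. right. apply NNPP; intros C; apply Hno; eauto.
      + destruct H; subst; auto. }
    assert (Hh : exists h, rg h = sc g).
    { apply NNPP; intros C; apply Hns; intros h Hh; apply C; eauto. }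
    destruct Hh as [h Hh].
    exists (BInf (prep [] (fun _ => e))), (BInf (prep [g] (fun _ => e))),
      (BInf (prep [h; g] (fun _ => e))).
    split; auto. split; auto. split; [apply Horb; simpl; auto|].
    split; [apply (binf_neq _ _ 0); simpl; auto|].
    split; [apply (binf_neq _ _ 1); simpl; auto|].
    apply (binf_neq _ _ 1); simpl; auto.
Qed.


Lemma inf_good {E : graph} (HD : forall v : vert E, ~ degenerate E v) (x : nat -> edge E) :
  in_bd (BInf x) -> three (BInf x).
Proof.
  intros Hx.
  destruct (classic (forall k, x (S k) = x (S (S k)))) as [C2|NC2].
  { apply (loop_good HD x (x 1)); auto.
    induction k as [|k IH]; auto. rewrite <- C2. auto. }
  set (sx := fun n => x (n + 1)).
  assert (Bsx : in_bd (BInf sx)) by (apply in_bd_shift; auto).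
  assert (Osx : Orb (BInf x) (BInf sx)).
  { apply (orb_inf _ _ 0 1); auto. intros k. unfold sx. f_equal. lia. }
  assert (Ox : Orb (BInf x) (BInf x)).
  { apply (orb_inf _ _ 0 0); auto. }
  assert (Nxsx : BInf x <> BInf sx).
  { intros C. injection C as C. apply NC2. intros k.
    pose proof (equal_f C (S k)) as H1. unfold sx in H1. rewrite Nat.add_1_r in H1. auto. }
  destruct (classic (forall k, x k = x (S (S k)))) as [C3|NC3].
  - set (a := x 0). set (b := x 1).
    assert (Hab : a <> b).
    { intros C. apply NC2.
      assert (Hk : forall k, x k = a /\ x (S k) = a).
      { induction k as [|k [IH1 IH2]]; [split; auto|]. split; auto. rewrite <- C3. auto. }
      intros k. rewrite (proj2 (Hk k)), (proj2 (Hk (S k))). auto. }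
    assert (x2 : x 2 = a) by (symmetry; apply C3).
    assert (Hrb : rg b = sc a) by (unfold b; rewrite Hx, x2; auto).
    assert (Hra : rg a = sc b) by (apply Hx).
    set (v := sc a). set (w := sc b).
    destruct (classic (exists g, rg g = v /\ g <> b)) as [[g [Hg Hgb]]|N1].
    { exists (BInf x), (BInf sx), (BInf (prep [g] x)).
      split; auto. split; auto. split.
      - apply (orb_inf _ _ 1 0); auto.
        + eapply in_bd_prep; eauto; simpl; auto.
        + intros k. rewrite prep_drop. f_equal. lia.
      - split; auto. split.
        + apply (binf_neq _ _ 1). simpl. fold a b. auto.
        + apply (binf_neq _ _ 0). simpl. unfold sx. simpl. fold b. auto. }
    destruct (classic (exists g, rg g = w /\ g <> a)) as [[g [Hg Hga]]|N2].
    { exists (BInf x), (BInf sx), (BInf (prep [g] sx)).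
      split; auto. split; auto. split.
      - apply (orb_inf _ _ 1 1); auto.
        + eapply in_bd_prep; eauto; simpl; auto.
        + intros k. rewrite prep_drop. unfold sx. auto.
      - split; auto. split.
        + apply (binf_neq _ _ 0). simpl. fold a. auto.
        + apply (binf_neq _ _ 1). simpl. unfold sx. simpl. rewrite x2. fold b. auto. }
    exfalso.
    assert (Hv : forall g, rg g = v -> g = b).
    { intros g Hg. apply NNPP; intros C; apply N1; eauto. }
    assert (Hw : forall g, rg g = w -> g = a).
    { intros g Hg. apply NNPP; intros C; apply N2; eauto. }
    destruct (classic (w = v)) as [Hwv|Hwv].
    + apply Hab. apply Hv. rewrite Hra. exact Hwv.
    + apply (HD v). right; right; left. exists w, b, a.
      split; [exact Hwv|]. split.
      { intros g; split; intros H; [apply Hv; exact H|rewrite H; exact Hrb]. }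
      split; [reflexivity|]. split.
      { intros g; split; intros H; [apply Hw; exact H|rewrite H; exact Hra]. }
      reflexivity.
  - set (ssx := fun n => x (n + 2)).
    exists (BInf x), (BInf sx), (BInf ssx).
    split; auto. split; auto. split.
    + apply (orb_inf _ _ 0 2); auto.
      * apply in_bd_shift; auto.
      * intros k. unfold ssx. f_equal. lia.
    + split; auto. split.
      * intros C. injection C as C. apply NC3. intros k.
        pose proof (equal_f C k) as H1. unfold ssx in H1. rewrite H1. f_equal. lia.
      * intros C. injection C as C. apply NC2. intros k.
        pose proof (equal_f C k) as H1. unfold sx, ssx in H1.
        replace (S (S k)) with (k + 2) by lia. replace (S k) with (k + 1) by lia. exact H1.
Qed.

Lemma part2 {E : graph} :
  ((forall x : bpath E, in_bd x ->
      exists a b c, Orb x a /\ Orb x b /\ Orb x c /\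
        a <> b /\ a <> c /\ b <> c)
   <-> (forall v : vert E, ~ @degenerate E v)).
Proof.
  split.
  - intros H v Hd. destruct (deg_bad v Hd) as [x [Hx Hn]]. apply Hn. apply H; auto.
  - intros HD [v l|x] Hx.
    + apply (fin_good HD v l Hx).
    + apply (inf_good HD x Hx).
Qed.

Theorem proposition10p7 (E : graph) :
  ((forall U : bpath E -> Prop,
      bd_clopen U -> (exists y, in_bd y /\ U y) ->
      exists x y, in_bd x /\ U x /\ U y /\ x <> y /\ Orb x y)
   <-> (condL E /\ condT E))
  /\
  ((forall x : bpath E, in_bd x ->
      exists a b c, Orb x a /\ Orb x b /\ Orb x c /\
        a <> b /\ a <> c /\ b <> c)
   <-> (forall v : vert E, ~ @degenerate E v)).
Proof.
  split; [apply part1 | apply part2].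
Qed.
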